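(* Let $(X,\mathcal{M})$ be a measurable space, $\Sigma$ a compact Hausdorff group with Haar probability measure $\mu_\Sigma$ acting measurably on $X$ via $T_\sigma$, and let $P,Q\in\mathcal{P}(X)$ be $\Sigma$-invariant (i.e. $P\circ T_\sigma^{-1}=P$, $Q\circ T_\sigma^{-1}=Q$ for all $\sigma\in\Sigma$). (i) If $\Gamma\subset\mathcal{M}_b(X)$ satisfies $S_\Sigma[\Gamma]\subset\Gamma$, then $D_f^\Gamma(Q\|P)=D_f^{\Gamma^{\mathrm{inv}}_\Sigma}(Q\|P)$ and $W^\Gamma(Q,P)=W^{\Gamma^{\mathrm{inv}}_\Sigma}(Q,P)$. (ii) If $\Gamma\subset\mathcal{M}_b(X)^2$ satisfies $S_\Sigma[\Gamma]\subset\Gamma$ (with $S_\Sigma$ applied componentwise) and the cost $c$ is $\Sigma$-invariant, i.e. $c(T_\sigma(x),T_\sigma(y))=c(x,y)$ for all $\sigma\in\Sigma$, $x,y\in X$, then $\mathcal{SD}^\Gamma_{c,\epsilon}(Q,P)=\mathcal{SD}^{\Gamma^{\mathrm{inv}}_\Sigma}_{c,\epsilon}(Q,P)$.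
   Context: $\mathcal{M}_b(X)$: bounded measurable functions; $\mathcal{P}(X)$: probability measures. $S_\Sigma[\gamma](x)=\int_\Sigma\gamma(T_{\sigma}(x))\mu_\Sigma(d\sigma)$. For $\Gamma$ a set of functions (or tuples of functions), $\Gamma^{\mathrm{inv}}_\Sigma=\{\gamma\in\Gamma:\gamma\circ T_\sigma=\gamma\ \forall\sigma\in\Sigma\}$ (componentwise for tuples). Let $f:[0,\infty)\to\mathbb{R}$ be convex, lower semicontinuous, $f(1)=0$, strictly convex at $1$, with Legendre transform $f^*(y)=\sup_x\{yx-f(x)\}$. The $(f,\Gamma)$-divergence is $D_f^\Gamma(Q\|P)=\sup_{\gamma\in\Gamma}\{E_Q[\gamma]-\Lambda_f^P[\gamma]\}$ with $\Lambda_f^P[\gamma]=\inf_{\nu\in\mathbb{R}}\{\nu+E_P[f^*(\gamma-\nu)]\}$. The $\Gamma$-IPM is $W^\Gamma(Q,P)=\sup_{\gamma\in\Gamma}\{E_Q[\gamma]-E_P[\gamma]\}$. For a measurable cost $c:X\times X\to[0,\infty)$, $\epsilon>0$ and $\Gamma$ a set of pairs $(\gamma_1,\gamma_2)$, $W^\Gamma_{c,\epsilon}(Q,P)=\sup_{(\gamma_1,\gamma_2)\in\Gamma}\{E_P[\gamma_1]+E_Q[\gamma_2]-\epsilon E_{P\times Q}[\exp((\gamma_1\oplus\gamma_2-c)/\epsilon)]+\epsilon\}$ where $\gamma_1\oplus\gamma_2(x,y)=\gamma_1(x)+\gamma_2(y)$, and the Sinkhorn divergence is $\mathcal{SD}^\Gamma_{c,\epsilon}(Q,P)=W^\Gamma_{c,\epsilon}(Q,P)-\tfrac12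 W^\Gamma_{c,\epsilon}(Q,Q)-\tfrac12 W^\Gamma_{c,\epsilon}(P,P)$. *)

(* Defs.v *)
From HB Require Import structures.
From mathcomp Require Import all_boot all_order all_algebra.
From mathcomp Require Import all_classical all_reals all_analysis.
Set Implicit Arguments. Unset Strict Implicit. Unset Printing Implicit Defensive.
Import Order.TTheory GRing.Theory Num.Theory.
Import numFieldNormedType.Exports.
Local Open Scope classical_set_scope.
Local Open Scope ring_scope.

Definition Borel (S : ptopologicalType) := g_sigma_algebraType (@open S).

Definition compact_hausdorff_group (S : ptopologicalType)
  (mul : S -> S -> S) (inv : S -> S) (e : S) : Prop :=
  [/\ (forall a b c, mul a (mul b c) = mul (mul a b) c),
      (forall a, mul e a = a /\ mul a e = a),
      (forall a, mul (inv a) a = e /\ mul a (inv a) = e) &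
      [/\ continuous (fun p : S * S => mul p.1 p.2),
      continuous inv,
      compact [set: S] & hausdorff_space S]].

Definition haar_probability (R : realType) (S : ptopologicalType)
  (mul : S -> S -> S) (mu : probability (Borel S) R) : Prop :=
  [/\ (forall (s : S) (A : set (Borel S)), measurable A ->
          mu [set mul s a | a in A] = mu A),
      (forall (s : S) (A : set (Borel S)), measurable A ->
          mu [set mul a s | a in A] = mu A),
      (forall A : set (Borel S), measurable A ->
          mu A = ereal_inf [set mu U | U in [set U : set (Borel S) | open (U : set S) /\ A `<=` U]]) &
      (forall U : set (Borel S), open (U : set S) ->
          mu U = ereal_sup [set mu K | K in [set K : set (Borel S) | compact (K : set S) /\ K `<=` U]])].

Definition measurable_action d (X : measurableType d) (S : ptopologicalType)
  (mul : S -> S -> S) (e : S) (T : S -> X -> X) : Prop :=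
  [/\ (forall x, T e x = x),
      (forall s t x, T (mul s t) x = T s (T t x)) &
      measurable_fun [set: (Borel S * X)%type] (fun p : Borel S * X => T p.1 p.2)].

Definition invariant_prob d (X : measurableType d) (R : realType) (S : Type)
  (T : S -> X -> X) (P : probability X R) : Prop :=
  forall s (A : set X), measurable A -> P (T s @^-1` A) = P A.

Definition Mb d (X : measurableType d) (R : realType) : set (X -> R) :=
  [set g : X -> R | measurable_fun [set: X] g /\ exists M : R, forall x, `|g x| <= M].

Definition symm d (X : measurableType d) (R : realType) (S : ptopologicalType)
  (mu : probability (Borel S) R) (T : S -> X -> X) (g : X -> R) : X -> R :=
  fun x => Rintegral mu [set: Borel S] (fun s : Borel S => g (T s x)).

Definition symm2 d (X : measurableType d) (R : realType) (S : ptopologicalType)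
  (mu : probability (Borel S) R) (T : S -> X -> X) (g : (X -> R) * (X -> R)) :=
  (symm mu T g.1, symm mu T g.2).

Definition inv_part (X S R : Type) (T : S -> X -> X) (G : set (X -> R)) :=
  [set g | G g /\ forall s, g \o T s = g].

Definition inv_part2 (X S R : Type) (T : S -> X -> X)
  (G : set ((X -> R) * (X -> R))) :=
  [set g | G g /\ forall s, g.1 \o T s = g.1 /\ g.2 \o T s = g.2].

(* conditions on f : [0,oo) -> R (only values on [0,oo) are relevant) *)
Definition admissible_f (R : realType) (f : R -> R) : Prop :=
  [/\ (forall x y t, 0 <= x -> 0 <= y -> 0 <= t <= 1 ->
         f (t * x + (1 - t) * y) <= t * f x + (1 - t) * f y),
      (forall x, 0 <= x -> forall eps, 0 < eps -> exists2 del, 0 < del &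
         forall y, 0 <= y -> `|y - x| < del -> f x - eps < f y),
      f 1 = 0 &
      (forall x y t, 0 <= x -> 0 <= y -> 0 < t < 1 -> x != y ->
         t * x + (1 - t) * y = 1 -> f 1 < t * f x + (1 - t) * f y)].

Local Open Scope ereal_scope.

Definition fstar (R : realType) (f : R -> R) (y : R) : \bar R :=
  ereal_sup [set ((y * x - f x)%R)%:E | x in [set x : R | (0 <= x)%R]].

Definition Ex d (X : measurableType d) (R : realType) (P : probability X R)
  (g : X -> R) : \bar R := \int[P]_x (g x)%:E.

Definition Lambda d (X : measurableType d) (R : realType) (f : R -> R)
  (P : probability X R) (g : X -> R) : \bar R :=
  ereal_inf [set nu%:E + \int[P]_x fstar f (g x - nu)%R | nu in [set: R]].

Definition Dfg d (X : measurableType d) (R : realType) (f : R -> R)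
  (G : set (X -> R)) (Q P : probability X R) : \bar R :=
  ereal_sup [set Ex Q g - Lambda f P g | g in G].

Definition IPM d (X : measurableType d) (R : realType)
  (G : set (X -> R)) (Q P : probability X R) : \bar R :=
  ereal_sup [set Ex Q g - Ex P g | g in G].

Definition Wce d (X : measurableType d) (R : realType) (c : X -> X -> R)
  (eps : R) (G : set ((X -> R) * (X -> R))) (Q P : probability X R) : \bar R :=
  ereal_sup [set Ex P g.1 + Ex Q g.2
     - eps%:E * \int[P \x Q]_z (expR ((g.1 z.1 + g.2 z.2 - c z.1 z.2) / eps))%:E
     + eps%:E | g in G].

Definition SD d (X : measurableType d) (R : realType) (c : X -> X -> R)
  (eps : R) (G : set ((X -> R) * (X -> R))) (Q P : probability X R) : \bar R :=
  Wce c eps G Q P - (2^-1)%:E * Wce c eps G Q Q - (2^-1)%:E * Wce c eps G P P.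

(* Main.v *)
Require Import Defs.
From HB Require Import structures.
From mathcomp Require Import all_boot all_order all_algebra.
From mathcomp Require Import all_classical all_reals all_analysis measurable_realfun.
From mathcomp Require Import ring lra.
Import Order.TTheory GRing.Theory Num.Theory.
Import numFieldNormedType.Exports.
Local Open Scope classical_set_scope.
Local Open Scope ring_scope.
Section generic.
Local Open Scope ereal_scope.
Context (R : realType).

Lemma le_integral_m dY (Y : measurableType dY) (m : {measure set Y -> \bar R})
  (u v : Y -> \bar R) :
  measurable_fun setT u -> measurable_fun setT v -> (forall y, u y <= v y) ->
  \int[m]_y u y <= \int[m]_y v y.
Proof.
move=> mu mv uv; rewrite integralE [leRHS]integralE.
apply: leeB; apply: ge0_le_integral => //;
  try (exact: measurable_funepos); try (exact: measurable_funeneg).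
- by move=> y _; apply: (@funepos_le _ _ setT) => //; rewrite inE.
- by move=> y _; apply: (@funeneg_le _ _ setT) => //; rewrite inE.
Qed.

Lemma inv_integral dY (Y : measurableType dY) (m : {measure set Y -> \bar R})
  (phi : Y -> Y) :
  measurable_fun setT phi -> (forall A, measurable A -> m (phi @^-1` A) = m A) ->
  forall h : Y -> \bar R, measurable_fun setT h ->
  \int[m]_y h (phi y) = \int[m]_y h y.
Proof.
move=> mphi minv.
have ge0 : forall h : Y -> \bar R, measurable_fun setT h -> (forall y, 0 <= h y) ->
    \int[m]_y h (phi y) = \int[m]_y h y.
  move=> h mh h0.
  have := @ge0_integral_pushforward _ _ _ _ R phi mphi m setT h measurableT mh
    (fun y _ => h0 y).
  rewrite preimage_setT => <-.
  apply: eq_measure_integral => A mA _ /=.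
  by rewrite /pushforward minv.
move=> h mh; rewrite integralE [RHS]integralE.
congr (_ - _).
- transitivity (\int[m]_y h^\+ (phi y)).
    by apply: eq_integral => y _; rewrite !funeposE.
  apply: (ge0 (h^\+)); [exact: measurable_funepos | exact: funepos_ge0].
- transitivity (\int[m]_y h^\- (phi y)).
    by apply: eq_integral => y _; rewrite !funenegE.
  apply: (ge0 (h^\-)); [exact: measurable_funeneg | exact: funeneg_ge0].
Qed.

Lemma bnd_integrable dY (Y : measurableType dY) (m : probability Y R)
  (k : Y -> R) (M : R) :
  measurable_fun setT k -> (forall y, `|k y| <= M)%R ->
  m.-integrable setT (EFin \o k).
Proof.
move=> mk kM; apply/integrableP; split; first exact/measurable_EFinP.
apply: (@le_lt_trans _ _ (\int[m]_y M%:E)).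
  apply: ge0_le_integral => //.
  - apply/measurable_EFinP; apply: measurableT_comp => //.
  - by move=> y _; rewrite /= lee_fin.
rewrite integral_cst //.
have -> : M%:E * m [set: Y] = M%:E.
  transitivity (M%:E * 1); last exact: mule1.
  congr (_ * _); exact: probability_setT.
exact: ltry.
Qed.

End generic.
Section shift.
Local Open Scope ereal_scope.
Context (R : realType).

Lemma int_cst_prob dY (Y : measurableType dY) (m : probability Y R) (r : \bar R) :
  \int[m]_y (cst r) y = r.
Proof.
rewrite integral_cst //.
transitivity (r * 1); last exact: mule1.
congr (_ * _); exact: probability_setT.
Qed.

Lemma shift_integral dY (Y : measurableType dY) (m : probability Y R)
  (u : Y -> \bar R) (c : R) :
  (0 <= c)%R -> measurable_fun setT u -> (forall y, (- c)%:E <= u y) ->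
  \int[m]_y u y = \int[m]_y (u y + c%:E) - c%:E.
Proof.
move=> c0 mu uc.
have negc y : u^\- y <= c%:E.
  rewrite funenegE ge_max; apply/andP; split; last by rewrite lee_fin.
  by rewrite leeNl -EFinN uc.
have negfin y : u^\- y \is a fin_num.
  rewrite ge0_fin_numE ?funeneg_ge0 //; exact: (le_lt_trans (negc y) (ltry _)).
have mneg : measurable_fun setT u^\- by exact: measurable_funeneg.
have mpos : measurable_fun setT u^\+ by exact: measurable_funepos.
have mcn : measurable_fun setT (fun y => c%:E - u^\- y).
  by apply: emeasurable_funB => //.
have cn0 y : 0 <= c%:E - u^\- y by rewrite subre_ge0 ?negc.
have H1 : \int[m]_y (u y + c%:E) = \int[m]_y u^\+ y + \int[m]_y (c%:E - u^\- y).
  rewrite -ge0_integralD //; try (by move=> y _; first [exact: funepos_ge0 | exact: cn0 | exact: funeneg_ge0]).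
  apply: eq_integral => y _.
  by rewrite {1}(funeposneg u) /= addeA addeAC.
have H2 : \int[m]_y (c%:E - u^\- y) + \int[m]_y u^\- y = c%:E.
  rewrite -ge0_integralD //; try (by move=> y _; first [exact: funepos_ge0 | exact: cn0 | exact: funeneg_ge0]).
  transitivity (\int[m]_y (cst c%:E) y).
    by apply: eq_integral => y _; rewrite subeK.
  exact: int_cst_prob.
have Bfin : \int[m]_y u^\- y \is a fin_num.
  rewrite ge0_fin_numE; last by apply: integral_ge0 => y _; exact: funeneg_ge0.
  apply: (@le_lt_trans _ _ (\int[m]_y (cst c%:E) y)); last first.
    by rewrite int_cst_prob ltry.
  apply: ge0_le_integral => //; try (by move=> y _; first [exact: funeneg_ge0 | exact: negc]).
have HJ : \int[m]_y (c%:E - u^\- y) = c%:E - \int[m]_y u^\- y.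
  by move: H2 => /(congr1 (fun z => z - \int[m]_y u^\- y)); rewrite addeK.
rewrite H1 HJ integralE.
move: Bfin; set B := \int[m]_y u^\- y; set A := \int[m]_y u^\+ y.
have A0 : 0 <= A by apply: integral_ge0 => y _; exact: funepos_ge0.
move: A0; case: A => [a| |] // _; case: B => [b| |] // _.
  by rewrite /adde /oppe /=; congr EFin; ring.
Qed.
End shift.

Arguments shift_integral {R dY Y} m {u c}.
Arguments int_cst_prob {R dY Y}.
Section fstar_lemmas.
Local Open Scope ereal_scope.
Context (R : realType).
Implicit Types f : R -> R.

Lemma fstar_ub f y t : (0 <= t)%R -> ((y * t - f t)%R)%:E <= fstar f y.
Proof.
by move=> t0; apply: ereal_sup_ubound; exists t.
Qed.

Lemma fstar_lb f y : (- `|f 0|)%:E <= fstar f y.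
Proof.
apply: le_trans (fstar_ub f y 0%R (lexx _)); rewrite lee_fin mulr0 sub0r lerN2.
exact: ler_norm.
Qed.

Lemma fstar_meas f : measurable_fun setT (fstar f).
Proof.
apply: lower_semicontinuous_measurable; apply/lower_semicontinuousP => a.
have -> : [set x | a%:E < fstar f x] =
    \bigcup_(t in [set t : R | (0 <= t)%R]) [set x | (a < x * t - f t)%R].
  apply/seteqP; split => x /=.
    move=> /ereal_sup_gt[_ [t t0 <-]]; rewrite lte_fin => ht.
    by exists t.
  move=> [t t0 ht]; apply: (lt_le_trans _ (fstar_ub f x t t0)).
  by rewrite lte_fin.
apply: bigcup_open => t _.
have ct : continuous (fun x : R => (x * t - f t)%R).
  move=> x; apply: cvgB; last exact: cvg_cst.
  apply: cvgMl; exact: cvg_id.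
by apply: (open_comp (D := [set z | a < z]%R)) => [z _|]; [exact: ct | exact: open_gt].
Qed.

End fstar_lemmas.
Arguments fstar_ub {R}.
Arguments fstar_lb {R}.
Arguments fstar_meas {R}.
Section lin.
Context (R : realType) (dY : measure_display) (Y : measurableType dY).
Implicit Types u v : Y -> R.

Lemma Mb_add u v : Mb u -> Mb v -> Mb (fun y => u y + v y).
Proof.
move=> [mu [M hM]] [mv [N hN]]; split; first exact: measurable_funD.
exists (M + N) => y; apply: le_trans (ler_normD _ _) _; exact: lerD.
Qed.

Lemma Mb_scale (a : R) u : Mb u -> Mb (fun y => a * u y).
Proof.
move=> [mu [M hM]]; split; first by apply: measurable_funM => //.
exists (`|a| * M) => y; rewrite normrM; apply: ler_wpM2l => //.
Qed.

Lemma Mb_cst (c : R) : Mb (fun _ : Y => c).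
Proof. by split => //; exists `|c|. Qed.

Lemma Mb_bound u : Mb u -> exists M, forall y, `|u y| <= M.
Proof. by case. Qed.

Lemma Mb_meas u : Mb u -> measurable_fun setT u.
Proof. by case. Qed.

Variable m : probability Y R.

Lemma Mb_int u : Mb u -> m.-integrable setT (EFin \o u).
Proof. by move=> [mu [M hM]]; exact: (@bnd_integrable R _ _ m u M mu hM). Qed.

Lemma int_EFin u : Mb u -> (\int[m]_y (u y)%:E)%E = (Rintegral m setT u)%:E.
Proof. by move=> hu; rewrite /Rintegral fineK // integrable_fin_num // Mb_int. Qed.

Lemma Rint_add u v : Mb u -> Mb v ->
  Rintegral m setT (fun y => u y + v y) = Rintegral m setT u + Rintegral m setT v.
Proof. by move=> hu hv; rewrite RintegralD // Mb_int. Qed.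

Lemma Rint_scale (a : R) u : Mb u ->
  Rintegral m setT (fun y => a * u y) = a * Rintegral m setT u.
Proof. by move=> hu; rewrite RintegralZl // Mb_int. Qed.

Lemma Rint_cst (c : R) : Rintegral m setT (fun _ => c) = c.
Proof.
rewrite /Rintegral (_ : (\int[m]_y c%:E)%E = c%:E) //.
exact: (int_cst_prob m c%:E).
Qed.

End lin.
Arguments Mb_add {R dY Y u v}.
Arguments Mb_scale {R dY Y}.
Arguments Mb_cst {R dY Y}.
Arguments Mb_bound {R dY Y u}.
Arguments Mb_meas {R dY Y u}.
Arguments Mb_int {R dY Y m u}.
Arguments int_EFin {R dY Y m u}.
Arguments Rint_add {R dY Y m u v}.
Arguments Rint_scale {R dY Y m}.
Arguments Rint_cst {R dY Y m}.
Section group.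
Context (R : realType) (d : measure_display) (X : measurableType d)
  (S : ptopologicalType) (mul : S -> S -> S) (inv : S -> S) (e : S)
  (mu : probability (Borel S) R) (T : S -> X -> X).
Hypotheses (HG : compact_hausdorff_group mul inv e) (HH : haar_probability mul mu)
  (HA : measurable_action mul e T).

Lemma mT : measurable_fun [set: (Borel S * X)%type] (fun p : Borel S * X => T p.1 p.2).
Proof. by case: HA. Qed.

Lemma actM s t x : T (mul s t) x = T s (T t x).
Proof. by case: HA. Qed.

Lemma mTs (s : S) : measurable_fun [set: X] (T s).
Proof. exact: (measurableT_comp mT (pair1_measurable (s : Borel S))). Qed.

Lemma mgT (g : X -> R) : measurable_fun setT g ->
  measurable_fun [set: (Borel S * X)%type] (fun p : Borel S * X => g (T p.1 p.2)).
Proof. by move=> mg; exact: (measurableT_comp mg mT). Qed.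

Lemma mgTx (g : X -> R) x : measurable_fun setT g ->
  measurable_fun [set: Borel S] (fun s : Borel S => g (T s x)).
Proof. by move=> mg; apply: (measurable_fun_pair1 (f := fun p : Borel S * X => g (T p.1 p.2))); exact: mgT. Qed.

Lemma rmul_cont s : continuous (fun a : S => mul a s).
Proof.
case: HG => _ _ _ [cm _ _ _] a.
apply: (@continuous_comp _ _ _ (fun a : S => (a, s)) (fun p : S * S => mul p.1 p.2)).
  by apply: cvg_pair; [exact: cvg_id | exact: cvg_cst].
exact: cm.
Qed.

Lemma mrmul s : measurable_fun [set: Borel S] (fun a : Borel S => (mul a s : Borel S)).
Proof.
apply: (@measurability _ _ (Borel S) (Borel S) setT _ (@open S)); first by [].
move=> _ [U oU <-]; apply: sub_sigma_algebra; rewrite setTI.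
by move/continuousP : (rmul_cont s); apply.
Qed.

Lemma mu_rmul s (A : set (Borel S)) : measurable A ->
  mu ((fun a : Borel S => (mul a s : Borel S)) @^-1` A) = mu A.
Proof.
move=> mA; case: HG => assoc unit invl _.
have -> : (fun a : Borel S => (mul a s : Borel S)) @^-1` A = [set mul a (inv s) | a in A].
  apply/seteqP; split => a /=.
    move=> Ha; exists (mul a s) => //.
    by rewrite -assoc (proj2 (invl s)) (proj2 (unit a)).
  by move=> [b Hb <-]; rewrite -assoc (proj1 (invl s)) (proj2 (unit b)).
by case: HH => _ H _ _; rewrite H.
Qed.

Lemma int_rmul s (h : Borel S -> \bar R) : measurable_fun setT h ->
  (\int[mu]_a h (mul a s) = \int[mu]_a h a)%E.
Proof.
move=> mh; apply: (@inv_integral R _ _ mu (fun a => mul a s)) => //.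
  exact: mrmul.
exact: mu_rmul.
Qed.

Lemma symm_inv (g : X -> R) s : measurable_fun setT g ->
  symm mu T g \o T s = symm mu T g.
Proof.
move=> mg; apply/funext => x /=; rewrite /symm /Rintegral; congr fine.
transitivity (\int[mu]_a (g (T a x))%:E )%E; last by [].
transitivity (\int[mu]_a ((fun b : Borel S => (g (T b x))%:E) (mul a s)))%E.
  by apply: eq_integral => a _ /=; rewrite actM.
apply: int_rmul; apply/measurable_EFinP; exact: mgTx.
Qed.

End group.
Arguments mT {d X S mul e T}.
Arguments actM {d X S mul e T}.
Arguments mTs {d X S mul e T}.
Arguments mgT {R d X S mul e T}.
Arguments mgTx {R d X S mul e T}.
Arguments rmul_cont {S mul inv e}.
Arguments mrmul {S mul inv e}.
Arguments mu_rmul {R S mul inv e mu}.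
Arguments int_rmul {R S mul inv e mu}.
Arguments symm_inv {R d X S mul inv e mu T}.
Section expect.
Context (R : realType) (d : measure_display) (X : measurableType d)
  (S : ptopologicalType) (mul : S -> S -> S) (inv : S -> S) (e : S)
  (mu : probability (Borel S) R) (T : S -> X -> X).
Hypotheses (HG : compact_hausdorff_group mul inv e) (HH : haar_probability mul mu)
  (HA : measurable_action mul e T).

Lemma Mb_sec (g : X -> R) x : Mb g -> Mb (fun s : Borel S => g (T s x)).
Proof.
move=> [mg [M hM]]; split; first exact: (mgTx HA).
by exists M.
Qed.

Lemma swap_meas {dA dB} {A : measurableType dA} {B : measurableType dB} :
  measurable_fun [set: (A * B)%type] (fun z : A * B => (z.2, z.1)).
Proof. exact: measurable_fun_pair. Qed.
Lemma swap_meas_old dA dB (A : measurableType dA) (B : measurableType dB) :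
  measurable_fun [set: (A * B)%type] (fun z : A * B => (z.2, z.1)).
Proof. exact: measurable_fun_pair. Qed.

Lemma symmE (g : X -> R) x : Mb g ->
  (symm mu T g x)%:E = (\int[mu]_s (g (T s x))%:E)%E.
Proof. by move=> hg; rewrite /symm -int_EFin //; exact: Mb_sec. Qed.

Lemma inv_intX (Qm : probability X R) s (h : X -> \bar R) :
  invariant_prob T Qm -> measurable_fun setT h ->
  (\int[Qm]_x h (T s x) = \int[Qm]_x h x)%E.
Proof.
move=> iQ mh; apply: (@inv_integral R _ _ Qm (T s)) => //.
  exact: (mTs HA).
by move=> A mA; exact: iQ.
Qed.

Lemma Ex_symm (Qm : probability X R) (g : X -> R) :
  invariant_prob T Qm -> Mb g -> Ex Qm (symm mu T g) = Ex Qm g.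
Proof.
move=> iQ hg; rewrite /Ex.
transitivity (\int[Qm]_x \int[mu]_s (g (T s x))%:E)%E.
  by apply: eq_integral => x _; rewrite symmE.
have [mg [M hM]] := hg.
have mF : measurable_fun [set: (X * Borel S)%type]
    (fun z : X * Borel S => g (T z.2 z.1)).
  exact: (measurableT_comp (mgT HA _ mg) swap_meas).
rewrite (@Fubini _ _ _ _ R Qm mu (fun z : X * Borel S => (g (T z.2 z.1))%:E)); last first.
  exact: (@bnd_integrable R _ _ ((Qm \x mu)%E : probability _ R) _ M mF (fun z => hM _)).
transitivity (\int[mu]_s (cst (\int[Qm]_x (g x)%:E)) s)%E; last exact: int_cst_prob.
apply: eq_integral => s _ /=.
apply: (inv_intX _ _ (fun x => (g x)%:E)) => //.
exact/measurable_EFinP.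
Qed.

End expect.
Arguments Mb_sec {R d X S mul e T} HA {g} x.
Arguments symmE {R d X S mul e mu T} HA {g} x.
Arguments inv_intX {R d X S mul e T} HA {Qm} s h.
Arguments Ex_symm {R d X S mul e mu T} HA {Qm g}.
Lemma ge0_shift (R : realType) (c : R) (u : \bar R) : ((- c)%:E <= u -> 0 <= u + c%:E)%E.
Proof. by move=> h; rewrite -leeBlDr // sub0e -EFinN. Qed.

Section lambda.
Local Open Scope ereal_scope.
Context (R : realType) (d : measure_display) (X : measurableType d)
  (S : ptopologicalType) (mul : S -> S -> S) (inv : S -> S) (e : S)
  (mu : probability (Borel S) R) (T : S -> X -> X).
Hypotheses (HG : compact_hausdorff_group mul inv e) (HH : haar_probability mul mu)
  (HA : measurable_action mul e T).

Lemma mfstar (f : R -> R) dY (Y : measurableType dY) (u : Y -> R) (nu c : R) :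
  measurable_fun setT u ->
  measurable_fun setT (fun y => fstar f (u y - nu) + c%:E).
Proof.
move=> mu'; apply: emeasurable_funD => //.
apply: (measurableT_comp (fstar_meas f)).
by apply: measurable_funB => //.
Qed.

Lemma fstar_jensen (f : R -> R) (g : X -> R) x (nu : R) : Mb g ->
  fstar f (symm mu T g x - nu) + (`|f 0|)%R%:E <=
  \int[mu]_s (fstar f (g (T s x) - nu) + (`|f 0|)%R%:E).
Proof.
move=> hg; pose c0 : R := `|f 0|%R; rewrite -/c0.
rewrite -leeBrDr //.
apply: ge_ereal_sup => _ [t t0 <-].
rewrite leeBrDr // -EFinD.
pose k := fun s : Borel S => (t * g (T s x) + (- nu * t - f t + c0))%R.
have h1 : Mb (fun s : Borel S => (t * g (T s x))%R).
  exact: (Mb_scale t _ (Mb_sec HA x hg)).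
have h2 := @Mb_cst R _ (Borel S) (- nu * t - f t + c0)%R.
have hk : Mb k by exact: (Mb_add h1 h2).
have -> : ((symm mu T g x - nu) * t - f t + c0)%R = Rintegral mu setT k.
  rewrite /k (Rint_add h1 h2) (Rint_scale t _ (Mb_sec HA x hg)) Rint_cst /symm.
  ring.
rewrite -int_EFin //.
apply: le_integral_m.
- apply/measurable_EFinP; exact: Mb_meas.
- apply: mfstar; exact: (mgTx HA _ _ (Mb_meas hg)).
move=> s; rewrite /k.
have -> : ((t * g (T s x) + (- nu * t - f t + c0))%R)%:E =
    (((g (T s x) - nu) * t - f t)%R)%:E + c0%:E by rewrite -EFinD; congr EFin; ring.
by rewrite leeD2r // fstar_ub.
Qed.

Lemma fstar_int (f : R -> R) (P : probability X R) (g : X -> R) (nu : R) :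
  invariant_prob T P -> Mb g -> Mb (symm mu T g) ->
  \int[P]_x fstar f (symm mu T g x - nu) <= \int[P]_x fstar f (g x - nu).
Proof.
move=> iP hg hs; pose c0 : R := `|f 0|%R.
have c00 : (0 <= c0)%R by exact: normr_ge0.
have mf0 (u : X -> R) : measurable_fun setT u ->
    measurable_fun setT (fun x => fstar f (u x - nu)).
  move=> mu'; apply: (measurableT_comp (fstar_meas f)).
  by apply: measurable_funB => //.
rewrite (shift_integral P c00 (mf0 _ (Mb_meas hs))); last by move=> x; exact: fstar_lb.
rewrite [leRHS](shift_integral P c00 (mf0 _ (Mb_meas hg))); last by move=> x; exact: fstar_lb.
apply: leeB => //.
pose H := fun z : X * Borel S => fstar f (g (T z.2 z.1) - nu) + c0%:E.
have mH : measurable_fun setT H.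
  apply: mfstar.
  exact: (measurableT_comp (mgT HA _ (Mb_meas hg)) swap_meas).
have H0 z : 0 <= H z by apply: ge0_shift; exact: fstar_lb.
apply: (@le_trans _ _ (\int[P]_x \int[mu]_s H (x, s))).
  apply: ge0_le_integral => //.
  - by move=> x _; apply: ge0_shift; exact: fstar_lb.
  - exact: mfstar (Mb_meas hs).
  - exact: (measurable_fun_fubini_tonelli_F H mH H0).
  - by move=> x _; exact: fstar_jensen.
rewrite (fubini_tonelli H mH H0).
have -> : \int[mu]_s \int[P]_x H (x, s) =
    \int[mu]_s (cst (\int[P]_x (fstar f (g x - nu) + c0%:E))) s.
  apply: eq_integral => s _ /=.
  apply: (inv_intX HA s (fun x => fstar f (g x - nu) + c0%:E)) => //.
  exact: mfstar (Mb_meas hg).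
by rewrite int_cst_prob.
Qed.

Lemma Lambda_symm (f : R -> R) (P : probability X R) (g : X -> R) :
  invariant_prob T P -> Mb g -> Mb (symm mu T g) ->
  Lambda f P (symm mu T g) <= Lambda f P g.
Proof.
move=> iP hg hs; apply: le_ereal_inf_tmp => _ [nu _ <-].
apply: le_trans; first by apply: ereal_inf_lbound; exists nu.
by apply: leeD2l; exact: fstar_int.
Qed.

End lambda.
Section sink.
Local Open Scope ereal_scope.
Context (R : realType) (d : measure_display) (X : measurableType d)
  (S : ptopologicalType) (mul : S -> S -> S) (inv : S -> S) (e : S)
  (mu : probability (Borel S) R) (T : S -> X -> X).
Hypotheses (HG : compact_hausdorff_group mul inv e) (HH : haar_probability mul mu)
  (HA : measurable_action mul e T).

Lemma mdiag s : measurable_fun [set: (X * X)%type]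
  (fun z : X * X => (T s z.1, T s z.2)).
Proof.
apply: measurable_fun_pair.
- exact: (measurableT_comp (mTs HA s) measurable_fst).
- exact: (measurableT_comp (mTs HA s) measurable_snd).
Qed.

Lemma prod_inv (P Q : probability X R) (Phi : X * X -> \bar R) s :
  invariant_prob T P -> invariant_prob T Q ->
  measurable_fun setT Phi -> (forall z, 0 <= Phi z) ->
  \int[P \x Q]_z Phi (T s z.1, T s z.2) = \int[P \x Q]_z Phi z.
Proof.
move=> iP iQ mPhi Phi0.
have mPhis : measurable_fun setT (fun z : X * X => Phi (T s z.1, T s z.2)).
  exact: (measurableT_comp mPhi (mdiag s)).
rewrite (fubini_tonelli1 _ mPhis (fun z => Phi0 _)) (fubini_tonelli1 _ mPhi Phi0).
rewrite /fubini_F.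
transitivity (\int[P]_x \int[Q]_y Phi (T s x, y)).
  apply: eq_integral => x _.
  apply: (inv_intX HA s (fun y => Phi (T s x, y))) => //.
  exact: (measurableT_comp mPhi (pair1_measurable _)).
apply: (inv_intX HA s (fun x => \int[Q]_y Phi (x, y))) => //.
exact: (measurable_fun_fubini_tonelli_F Phi mPhi Phi0).
Qed.

Lemma exp_jensen (g1 g2 : X -> R) (c : X -> X -> R) (eps : R) (z : X * X) :
  (0 < eps)%R -> Mb g1 -> Mb g2 ->
  (forall s x y, c (T s x) (T s y) = c x y) ->
  (expR ((symm mu T g1 z.1 + symm mu T g2 z.2 - c z.1 z.2) / eps))%:E <=
  \int[mu]_s (expR ((g1 (T s z.1) + g2 (T s z.2) - c (T s z.1) (T s z.2)) / eps))%:E.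
Proof.
move=> eps0 hg1 hg2 cinv.
set a := ((symm mu T g1 z.1 + symm mu T g2 z.2 - c z.1 z.2) / eps)%R.
set E := expR a.
pose h := fun s : Borel S =>
  (eps^-1 * g1 (T s z.1) + (eps^-1 * g2 (T s z.2) + (- c z.1 z.2 / eps)))%R.
have hh : Mb h.
  apply: Mb_add; first exact: (Mb_scale _ _ (Mb_sec HA z.1 hg1)).
  apply: Mb_add; first exact: (Mb_scale _ _ (Mb_sec HA z.2 hg2)).
  exact: Mb_cst.
pose k := fun s : Borel S =>
  (E / eps * g1 (T s z.1) + (E / eps * g2 (T s z.2) + E * (1 - a - c z.1 z.2 / eps)))%R.
have k1 : Mb (fun s : Borel S => (E / eps * g1 (T s z.1))%R).
  exact: (Mb_scale _ _ (Mb_sec HA z.1 hg1)).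
have k2 : Mb (fun s : Borel S => (E / eps * g2 (T s z.2))%R).
  exact: (Mb_scale _ _ (Mb_sec HA z.2 hg2)).
have k3 := @Mb_cst R _ (Borel S) (E * (1 - a - c z.1 z.2 / eps))%R.
have k23 := Mb_add k2 k3.
have hk : Mb k by exact: (Mb_add k1 k23).
have -> : E = Rintegral mu setT k.
  rewrite /k (Rint_add k1 k23) (Rint_add k2 k3) Rint_cst.
  rewrite (Rint_scale _ _ (Mb_sec HA z.1 hg1)) (Rint_scale _ _ (Mb_sec HA z.2 hg2)).
  rewrite -/(symm mu T g1 z.1) -/(symm mu T g2 z.2).
  have eps0' : eps != 0%R by rewrite gt_eqF.
  rewrite /a; field.
  exact: eps0'.
rewrite -int_EFin //.
apply: le_integral_m.
- apply/measurable_EFinP; exact: Mb_meas.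
- apply/measurable_EFinP.
  have -> : (fun s : Borel S =>
      expR ((g1 (T s z.1) + g2 (T s z.2) - c (T s z.1) (T s z.2)) / eps)%R) = expR \o h.
    apply/funext => s /=; congr expR; rewrite /h cinv; field.
    by rewrite gt_eqF.
  have H1 := @measurable_expR R. have H2 := Mb_meas hh. exact: (measurableT_comp H1 H2).
move=> s; rewrite lee_fin cinv.
have -> : ((g1 (T s z.1) + g2 (T s z.2) - c z.1 z.2) / eps)%R = (a + (h s - a))%R.
  by rewrite /h /a; field; rewrite gt_eqF.
rewrite expRD /k.
have -> : (E / eps * g1 (T s z.1) + (E / eps * g2 (T s z.2) + E * (1 - a - c z.1 z.2 / eps)))%R
    = (E * (1 + (h s - a)))%R.
  by rewrite /h; field; rewrite gt_eqF.
rewrite -/E; apply: ler_wpM2l; first exact: expR_ge0.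
exact: expR_ge1Dx.
Qed.

Lemma exp_int (P Q : probability X R) (g1 g2 : X -> R) (c : X -> X -> R) (eps : R) :
  invariant_prob T P -> invariant_prob T Q ->
  (0 < eps)%R -> Mb g1 -> Mb g2 -> Mb (symm mu T g1) -> Mb (symm mu T g2) ->
  measurable_fun [set: (X * X)%type] (fun z : X * X => c z.1 z.2) ->
  (forall s x y, c (T s x) (T s y) = c x y) ->
  \int[P \x Q]_z (expR ((symm mu T g1 z.1 + symm mu T g2 z.2 - c z.1 z.2) / eps))%:E <=
  \int[P \x Q]_z (expR ((g1 z.1 + g2 z.2 - c z.1 z.2) / eps))%:E.
Proof.
move=> iP iQ eps0 hg1 hg2 hs1 hs2 mc cinv.
pose PQ : probability (X * X)%type R := (P \x Q).
pose Phi := fun w : X * X => (expR ((g1 w.1 + g2 w.2 - c w.1 w.2) / eps))%:E.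
have mlin (u1 u2 : X -> R) : Mb u1 -> Mb u2 ->
    measurable_fun [set: (X * X)%type]
      (fun w : X * X => (expR ((u1 w.1 + u2 w.2 - c w.1 w.2) / eps))%:E).
  move=> hu1 hu2; apply/measurable_EFinP.
  have H2 : measurable_fun [set: (X * X)%type]
      (fun w : X * X => ((u1 w.1 + u2 w.2 - c w.1 w.2) / eps)%R).
    apply: measurable_funM => //; apply: measurable_funB => //.
    apply: measurable_funD.
    - exact: (measurableT_comp (Mb_meas hu1) measurable_fst).
    - exact: (measurableT_comp (Mb_meas hu2) measurable_snd).
  exact: (measurableT_comp (@measurable_expR R) H2).
have mPhi : measurable_fun setT Phi by exact: mlin.
have Phi0 w : 0 <= Phi w by rewrite lee_fin expR_ge0.
pose E := fun p : (X * X) * Borel S => Phi (T p.2 p.1.1, T p.2 p.1.2).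
have mE : measurable_fun setT E.
  apply: (measurableT_comp mPhi); apply: measurable_fun_pair.
  - exact: (measurableT_comp (mT HA)
      (measurable_fun_pair measurable_snd (measurableT_comp measurable_fst measurable_fst))).
  - exact: (measurableT_comp (mT HA)
      (measurable_fun_pair measurable_snd (measurableT_comp measurable_snd measurable_fst))).
have E0 p : 0 <= E p by exact: Phi0.
apply: (@le_trans _ _ (\int[PQ]_z \int[mu]_s E (z, s))).
  apply: ge0_le_integral => //.
  - exact: mlin.
  - exact: (measurable_fun_fubini_tonelli_F E mE E0).
  - by move=> z _; exact: (exp_jensen _ _ _ _ _ eps0 hg1 hg2 cinv).
rewrite (fubini_tonelli E mE E0).
have -> : \int[mu]_s \int[PQ]_z E (z, s) = \int[mu]_s (cst (\int[PQ]_z Phi z)) s.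
  apply: eq_integral => s _ /=.
  exact: (prod_inv _ _ Phi s iP iQ mPhi Phi0).
by rewrite int_cst_prob.
Qed.

End sink.
Arguments Lambda_symm {R d X S mul e mu T} HA f {P g}.
Arguments exp_int {R d X S mul e mu T} HA {P Q g1 g2 c eps}.

Lemma sup_sym (R : realType) (U : Type) (A B : set U) (F : U -> \bar R) (h : U -> U) :
  B `<=` A -> (forall a, A a -> B (h a) /\ (F a <= F (h a))%E) ->
  ereal_sup [set F a | a in A] = ereal_sup [set F b | b in B].
Proof.
move=> BA H; apply/le_anti/andP; split.
  apply: ge_ereal_sup => _ [a Aa <-]; have [Bh le] := H a Aa.
  apply: le_trans le _; apply: ereal_sup_ubound; by exists (h a).
apply: ereal_sup_le => _ [b Bb <-]; exists b => //; exact: BA.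
Qed.

Theorem theorem1 (R : realType) (d : measure_display) (X : measurableType d)
  (S : ptopologicalType) (mul : S -> S -> S) (inv : S -> S) (e : S)
  (mu : probability (Borel S) R) (T : S -> X -> X) (P Q : probability X R) :
  compact_hausdorff_group mul inv e ->
  haar_probability mul mu ->
  measurable_action mul e T ->
  invariant_prob T P -> invariant_prob T Q ->
  (forall (G : set (X -> R)) (f : R -> R),
     G `<=` @Mb _ X R ->
     (forall g, G g -> G (symm mu T g)) ->
     admissible_f f ->
     Dfg f G Q P = Dfg f (inv_part T G) Q P /\
     IPM G Q P = IPM (inv_part T G) Q P) /\
  (forall (G : set ((X -> R) * (X -> R))) (c : X -> X -> R) (eps : R),
     G `<=` [set g | @Mb _ X R g.1 /\ @Mb _ X R g.2] ->
     (forall g, G g -> G (symm2 mu T g)) ->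
     measurable_fun [set: (X * X)%type] (fun z : X * X => c z.1 z.2) ->
     (forall x y, 0 <= c x y) ->
     0 < eps ->
     (forall s x y, c (T s x) (T s y) = c x y) ->
     SD c eps G Q P = SD c eps (inv_part2 T G) Q P).
Proof.
move=> HG HH HA iP iQ; split.
  move=> G f GM Gs _.
  have key g : G g -> inv_part T G (symm mu T g).
    move=> Gg; split; first exact: Gs.
    by move=> s; apply: (symm_inv HG HH HA); exact: Mb_meas (GM _ Gg).
  split.
    apply: (@sup_sym _ _ _ _ _ (symm mu T)); first by move=> g [].
    move=> g Gg; split; first exact: key.
    rewrite (Ex_symm HA iQ (GM _ Gg)).
    apply: leeB => //.
    exact: (Lambda_symm HA f iP (GM _ Gg) (GM _ (Gs _ Gg))).
  apply: (@sup_sym _ _ _ _ _ (symm mu T)); first by move=> g [].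
  move=> g Gg; split; first exact: key.
  by rewrite (Ex_symm HA iQ (GM _ Gg)) (Ex_symm HA iP (GM _ Gg)).
move=> G c eps GM Gs mc _ eps0 cinv.
have Weq (A B : probability X R) : invariant_prob T A -> invariant_prob T B ->
    Wce c eps G A B = Wce c eps (inv_part2 T G) A B.
  move=> iA iB.
  apply: (@sup_sym _ _ _ _ _ (symm2 mu T)); first by move=> g [].
  move=> [g1 g2] Gg; have [hg1 hg2] := GM _ Gg.
  have [hs1 hs2] := GM _ (Gs _ Gg).
  split.
    split; first exact: Gs.
    move=> s; split.
      by apply: (symm_inv HG HH HA); exact: Mb_meas hg1.
    by apply: (symm_inv HG HH HA); exact: Mb_meas hg2.
  rewrite /= (Ex_symm HA iB hg1) (Ex_symm HA iA hg2).
  apply: leeD => //; apply: leeB => //.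
  apply: lee_wpmul2l; first by rewrite lee_fin ltW.
  exact: (exp_int HA iB iA eps0 hg1 hg2 hs1 hs2 mc cinv).
by rewrite /SD (Weq Q P iQ iP) (Weq Q Q iQ iQ) (Weq P P iP iP).
Qed.
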